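(* For every finite set $X$ of proposals with $m=|X|\geq 3$, the rank-variance DSF $\Delta_{\mathit{var}}$ violates Uniform Reinforcement; that is, there exist a profile $R:N\to X!$ and a perfectly uniform profile $R^U:N'\to X!$ with $N\cap N'=\emptyset$ such that $\Delta_{\mathit{var}}(R)\neq\Delta_{\mathit{var}}(R\oplus R^U)$.
   Context: $X!$ is the set of strict linear orders on $X$. A profile is a function $R:N\to X!$ with $N\subset\mathbb{N}$ finite and nonempty. $\mathit{pos}^R_i(x)=1+|\{y: y \text{ ranked above } x \text{ by } R(i)\}|$. The rank-variance DSF is $\Delta_{\mathit{var}}(R)=\arg\max_{x\in X}\frac{1}{|N|}\sum_{i\in N}(\mathit{pos}^R_i(x)-\mu^R(x))^2$ where $\mu^R(x)=\frac{1}{|N|}\sum_{i\in N}\mathit{pos}^R_i(x)$. A profile is perfectly uniform if each of the $m!$ linear orders on $X$ is reported by the same number of agents. For profiles $R:N\to X!$, $R':N'\to X!$ with $N\cap N'=\emptyset$, $R\oplus R'$ is the profile on $N\cup N'$ agreeing with $R$ on $N$ and $R'$ on $N'$. A DSF $\Delta$ satisfies Uniform Reinforcement if $\Delta(R)=\Delta(R\oplus R^U)$ for every profile $R:N\to X!$ and every perfectly uniform profile $R^U:N'\to X!$ with $N\cap N'=\emptyset$. *)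

(* Defs.v *)
From HB Require Import structures.
From mathcomp Require Import all_boot all_order all_algebra.
From mathcomp Require Import finmap.
Set Implicit Arguments. Unset Strict Implicit. Unset Printing Implicit Defensive.
Import Order.TTheory GRing.Theory Num.Theory.
Local Open Scope fset_scope.

(* A strict linear order on X, as a boolean relation r, where r (x,y)
   means "x is ranked above y". *)
Definition is_linord (X : finType) (r : {ffun X * X -> bool}) : bool :=
  [&& [forall x, ~~ r (x, x)],
      [forall x, forall y, forall z, r (x, y) && r (y, z) ==> r (x, z)] &
      [forall x, forall y, (x != y) ==> r (x, y) || r (y, x)]].

Definition linord (X : finType) := {r : {ffun X * X -> bool} | is_linord r}.

Definition above (X : finType) (o : linord X) (x y : X) : bool := val o (x, y).

Definition pos (X : finType) (o : linord X) (x : X) : nat :=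
  #|[set y | above o y x]|.+1.

(* A profile: a finite set N of agents (natural numbers) and a ballot for
   each agent (values outside N are irrelevant). *)
Record profile (X : finType) := Profile {
  agents : {fset nat};
  ballot : nat -> linord X }.

Definition nonempty_profile (X : finType) (R : profile X) : bool :=
  agents R != fset0.

Local Open Scope ring_scope.

Definition mu (X : finType) (R : profile X) (x : X) : rat :=
  (\sum_(i <- agents R) (pos (ballot R i) x)%:R) / (#|` agents R|)%:R.

Definition rank_var (X : finType) (R : profile X) (x : X) : rat :=
  (\sum_(i <- agents R) ((pos (ballot R i) x)%:R - mu R x) ^+ 2)
    / (#|` agents R|)%:R.

Definition Delta_var (X : finType) (R : profile X) : {set X} :=
  [set x | [forall y, rank_var R y <= rank_var R x]].

Definition perfectly_uniform (X : finType) (R : profile X) : Prop :=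
  exists k : nat, forall o : linord X,
    count (fun i => ballot R i == o) (agents R) = k.

(* R (+) R' : agents N u N', agreeing with R on N and R' on N'
   (meaningful when N and N' are disjoint) *)
Definition oplus (X : finType) (R R' : profile X) : profile X :=
  Profile (agents R `|` agents R')
          (fun i => if i \in agents R then ballot R i else ballot R' i).

(* Main.v *)
Require Import Defs.
From HB Require Import structures.
From mathcomp Require Import all_boot all_order all_algebra all_fingroup.
From mathcomp Require Import finmap.
From mathcomp Require Import zify ring lra.
Set Implicit Arguments. Unset Strict Implicit. Unset Printing Implicit Defensive.
Import Order.TTheory GRing.Theory Num.Theory.
Local Open Scope fset_scope.
Section Helpers.
Local Open Scope ring_scope.
Lemma sum_const_seq (s : seq nat) (c : rat) : \sum_(i <- s) c = c *+ size s.
Proof. by elim: s => [|a s IH]; rewrite ?big_nil ?big_cons ?IH ?mulrS. Qed.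

Lemma var_alt (s : seq nat) (f : nat -> rat) : (size s != 0)%N ->
  (\sum_(i <- s) (f i - (\sum_(j <- s) f j) / (size s)%:R) ^+ 2) / (size s)%:R
  = (\sum_(i <- s) f i ^+ 2) / (size s)%:R - ((\sum_(j <- s) f j) / (size s)%:R) ^+ 2.
Proof.
move=> hn.
set S1 := \sum_(j <- s) f j; set mu := S1 / _.
have -> : \sum_(i <- s) (f i - mu) ^+ 2 =
   \sum_(i <- s) f i ^+ 2 - (S1 * mu) *+ 2 + mu ^+ 2 *+ size s.
  rewrite -sum_const_seq /S1 mulr_suml -sumrMnl -sumrB -big_split /=.
  by apply: eq_bigr => i _; rewrite sqrrB.
rewrite /mu; have hn' : (size s)%:R != 0 :> rat by rewrite pnatr_eq0.
rewrite -mulr_natr; field; done.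
Qed.
Section S0.
Variable X : finType.

Definition r0 : {ffun X * X -> bool} := [ffun p => (enum_rank p.1 < enum_rank p.2)%N].
Lemma r0_lin : is_linord r0.
Proof.
apply/and3P; split.
- by apply/forallP => x; rewrite ffunE ltnn.
- apply/forallP => x; apply/forallP => y; apply/forallP => z; apply/implyP.
  rewrite !ffunE /= => /andP[]; exact: ltn_trans.
- apply/forallP => x; apply/forallP => y; apply/implyP => nxy.
  rewrite !ffunE /=.
  case: (ltngtP (enum_rank x) (enum_rank y)) => // /val_inj /enum_rank_inj E.
  by rewrite E eqxx in nxy.
Qed.
Definition o0 : linord X := exist _ r0 r0_lin.

Definition relab (s : {perm X}) (o : linord X) : {ffun X * X -> bool} :=
  [ffun p => val o (s p.1, s p.2)].
Lemma relab_lin s o : is_linord (relab s o).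
Proof.
have /and3P[/forallP H1 /forallP H2 /forallP H3] := valP o.
apply/and3P; split.
- by apply/forallP => x; rewrite ffunE H1.
- apply/forallP => x; apply/forallP => y; apply/forallP => z; rewrite !ffunE /=.
  exact: (forallP (forallP (H2 (s x)) (s y)) (s z)).
- apply/forallP => x; apply/forallP => y; apply/implyP => nxy; rewrite !ffunE /=.
  apply: (implyP (forallP (H3 (s x)) (s y))).
  by apply: contra nxy => /eqP/perm_inj ->.
Qed.
Definition relabel s o : linord X := exist _ (relab s o) (relab_lin s o).

Lemma relabelK s : cancel (relabel s) (relabel s^-1).
Proof.
move=> o; apply/val_inj/ffunP => -[a b]; rewrite /= !ffunE /= !permKV.
done.
Qed.

Lemma pos_relabel s o x : pos (relabel s o) x = pos o (s x).
Proof.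
unfold pos; congr S.
rewrite -[RHS](card_preimset _ (@perm_inj _ s)); apply: eq_card => y.
by rewrite !inE /above /= ffunE.
Qed.

Lemma sum_sym (F : nat -> rat) x y :
  (\sum_(o : linord X) F (pos o x) = \sum_(o : linord X) F (pos o y))%R.
Proof.
rewrite (reindex_inj (can_inj (relabelK (tperm x y)))).
by apply: eq_bigr => o _; rewrite pos_relabel tpermL.
Qed.
End S0.

Section Main.
Variable X : finType.
Definition elin : seq (linord X) := enum {: linord X}.
Definition KK := size elin.
Definition sA := [seq i.+1 | i <- iota 0 KK].
Definition AA : {fset nat} := seq_fset tt sA.
Definition bU (i : nat) := nth (o0 X) elin i.-1.
Definition RU := Profile AA bU.
Definition R1 := Profile [fset 0%N] (fun _ => o0 X).

Lemma sA_uniq : uniq sA.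
Proof. by rewrite map_inj_uniq ?iota_uniq // => a b []. Qed.

Lemma bigA (R : Type) (idx : R) (op : Monoid.com_law idx) (F : linord X -> R) :
  \big[op/idx]_(i <- AA) F (bU i) = \big[op/idx]_(o : linord X) F o.
Proof.
rewrite (perm_big _ (seq_fset_perm _ _)) undup_id ?sA_uniq //.
rewrite big_map /bU /=.
rewrite -[in RHS]big_enum /= -/elin.
by rewrite -[elin in RHS](mkseq_nth (o0 X)) /mkseq big_map.
Qed.

Lemma notin0 : (0 \notin AA)%N.
Proof. by rewrite seq_fsetE; apply/mapP => -[]. Qed.

Lemma KK_gt0 : (0 < KK)%N.
Proof. by rewrite /KK /elin -cardE; apply/card_gt0P; exists (o0 X). Qed.

Lemma cardAA : #|` AA| = KK.
Proof. by rewrite size_seq_fset undup_id ?sA_uniq // size_map size_iota. Qed.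

Lemma sum_comb (F : linord X -> rat) :
  \sum_(i <- agents (oplus R1 RU)) F (ballot (oplus R1 RU) i) =
  F (o0 X) + \sum_(o : linord X) F o.
Proof.
rewrite /= big_fsetU1 ?notin0 // fset11; congr (_ + _).
rewrite -(bigA _ F) big_seq [RHS]big_seq; apply: eq_bigr => i hi.
rewrite ifN //; rewrite inE; apply: contra notin0 => /eqP <-; done.
Qed.

Lemma card_comb : #|` agents (oplus R1 RU)| = KK.+1.
Proof. by rewrite /= cardfsU1 notin0 cardAA. Qed.

Definition T1 x := \sum_(o : linord X) ((pos o x)%:R : rat).
Definition T2 x := \sum_(o : linord X) ((pos o x)%:R : rat) ^+ 2.

Lemma rv_comb x : rank_var (oplus R1 RU) x =
  (((pos (o0 X) x)%:R) ^+ 2 + T2 x) / (KK.+1)%:R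
  - (((pos (o0 X) x)%:R + T1 x) / (KK.+1)%:R) ^+ 2.
Proof.
rewrite /rank_var /mu var_alt; last by rewrite card_comb.
rewrite card_comb.
rewrite (sum_comb (fun o => ((pos o x)%:R : rat) ^+ 2)).
by rewrite (sum_comb (fun o => ((pos o x)%:R : rat))).
Qed.

Lemma rv_R1 x : rank_var R1 x = 0.
Proof.
rewrite /rank_var /mu /= !big_seq_fset1 cardfs1 !divr1 subrr expr2 mul0r. reflexivity.
Qed.

End Main.

Section Final.
Local Open Scope ring_scope.
Variable X : finType.
Hypothesis hX : (3 <= #|X|)%N.

Lemma pos_o0 (i : 'I_#|X|) :
  pos (o0 X) (enum_val i) = #|[set y : X | (enum_rank y < i)%N]|.+1.
Proof.
rewrite /pos; congr S; apply: eq_card => y.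
by rewrite !inE /above /= ffunE /= enum_valK.
Qed.

Lemma key_diff (K t1 t2 p q : rat) : 0 <= K ->
  ((p ^+ 2 + t2) / (K + 1) - ((p + t1) / (K + 1)) ^+ 2)
  - ((q ^+ 2 + t2) / (K + 1) - ((q + t1) / (K + 1)) ^+ 2)
  = (K * (p ^+ 2 - q ^+ 2) - 2 * t1 * (p - q)) / (K + 1) ^+ 2.
Proof.
move=> hK; have hK1 : K + 1 != 0 by rewrite gt_eqF // ltr_wpDl.
by field.
Qed.

Lemma not_in_comb : exists z, z \notin Delta_var (oplus (R1 X) (RU X)).
Proof.
have h0 : (0 < #|X|)%N by lia.
have h1 : (1 < #|X|)%N by lia.
have hm : (#|X|.-1 < #|X|)%N by lia.
set x1 := enum_val (Ordinal h0).
set x2 := enum_val (Ordinal h1).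
set xm := enum_val (Ordinal hm).
have p1 : pos (o0 X) x1 = 1%N.
  rewrite pos_o0; congr S; apply/eqP; rewrite cards_eq0; apply/eqP/setP => y.
  by rewrite !inE ltn0.
have p2 : pos (o0 X) x2 = 2%N.
  rewrite pos_o0 (_ : [set y : X | _] = [set x1]) ?cards1 //; apply/setP => y.
  rewrite !inE /= ltnS leqn0 /x1 -(can2_eq (@enum_rankK _) (@enum_valK _)).
  by rewrite -val_eqE.
have pm : pos (o0 X) xm = #|X|.
  rewrite pos_o0 (_ : [set y : X | _] = [set~ xm]) ?cardsC1 ?(prednK h0) //.
  apply/setP => y.
  rewrite !inE /= /xm -(can2_eq (@enum_rankK _) (@enum_valK _)) -val_eqE /=.
  have hk : (enum_rank y < #|X|)%N := ltn_ord _. by rewrite ltn_neqAle -ltnS (prednK h0) hk andbT.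
have E1 : T1 x2 = T1 x1 by exact: (sum_sym (fun n => (n%:R : rat))).
have E1m : T1 xm = T1 x1 by exact: (sum_sym (fun n => (n%:R : rat))).
have E2 : T2 x2 = T2 x1 by exact: (sum_sym (fun n => (n%:R : rat) ^+ 2)).
have E2m : T2 xm = T2 x1 by exact: (sum_sym (fun n => (n%:R : rat) ^+ 2)).
have hK : (0 : rat) <= (KK X)%:R by [].
have hKp : (0 : rat) < (KK X)%:R by rewrite ltr0n KK_gt0.
exists x2; rewrite inE negb_forall.
have hdiff : forall y, pos (o0 X) y = pos (o0 X) x1 \/ pos (o0 X) y = pos (o0 X) xm -> 
   T1 y = T1 x1 -> T2 y = T2 x1 -> 
   0 < rank_var (oplus (R1 X) (RU X)) y - rank_var (oplus (R1 X) (RU X)) x2 ->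
   [exists y, ~~ (rank_var (oplus (R1 X) (RU X)) y <= rank_var (oplus (R1 X) (RU X)) x2)].
  move=> y _ _ _ hy; apply/existsP; exists y; rewrite -ltNge -subr_gt0 //.
rewrite -/(KK X) in hK hKp.
case: (ltrP (3%:R * (KK X)%:R) (2%:R * T1 x1)) => hc.
- apply: (hdiff x1); [by left | by [] | by [] |].
  rewrite !rv_comb E1 E2 -[(KK X).+1]addn1 natrD key_diff // p1 p2.
  apply: divr_gt0; last by apply: exprn_gt0; lra.
  rewrite !expr2 /=; lra.
- apply: (hdiff xm); [by right | by [] | by [] |].
  rewrite !rv_comb E1 E1m E2 E2m -[(KK X).+1]addn1 natrD key_diff // pm p2.
  apply: divr_gt0; last by apply: exprn_gt0; lra.
  have hM : (3 : rat) <= #|X|%:R by rewrite (ler_nat _ 3).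
  set M := (#|X|%:R : rat); set K := ((KK X)%:R : rat).
  have a1 : 0 <= (M - 2) * (3 * K - 2 * T1 x1) by apply: mulr_ge0; lra.
  have a2 : 0 < (M - 2) * ((M - 1) * K) by apply: mulr_gt0; [lra | apply: mulr_gt0; lra].
  have -> : K * (M ^+ 2 - 2%:R ^+ 2) - 2 * T1 x1 * (M - 2%:R)
     = (M - 2) * (3 * K - 2 * T1 x1) + (M - 2) * ((M - 1) * K) by ring.
  lra.
Qed.
End Final.
End Helpers.

Unset Implicit Arguments.
Theorem proposition3 (X : finType) (hX : 3 <= #|X|) :
  exists (R RU : profile X),
    [/\ nonempty_profile R, nonempty_profile RU,
        agents R `&` agents RU = fset0,
        perfectly_uniform RU &
        Delta_var R != Delta_var (oplus R RU)].
Proof.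
have [z hz] := not_in_comb hX.
exists (R1 X), (RU X); split.
- by apply/fset0Pn; exists 0%N; rewrite inE.
- apply/fset0Pn; exists 1%N; rewrite /= seq_fsetE; apply/mapP; exists 0%N => //.
  by rewrite mem_iota add0n KK_gt0.
- by apply: disjoint_fsetI0; rewrite fdisjoint1X notin0.
- exists 1%N => o.
  rewrite -sum1_count big_mkcond (bigA (R := nat) _ (fun o2 => if o2 == o then 1%N else 0%N)).
  by rewrite (bigD1 o) //= eqxx big1 // => o' /negbTE ->.
- apply/negP => /eqP E; move: hz; rewrite -E inE; apply/negP/negPn.
  by apply/forallP => y; rewrite !rv_R1.
Qed.
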